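(* Let $\mathcal{D}$ be a distribution on $\mathbb{R}^d$ with finite second moments, $f:\mathbb{R}^d\to\{0,1\}$ with $\Pr_{\mathcal{D}}[f=a]>0$ for $a\in\{0,1\}$, $q\ge2$, $1\le k\le q-1$, and for $a\in\{0,1\}$ let $\mathbf{X}_a$ denote $\mathbf{X}\sim\mathcal{D}$ conditioned on $f(\mathbf{X})=a$. Then the bag and pair covariance matrices of $\mathrm{Ex}(f,\mathcal{D},q,k)$ satisfy $$\boldsymbol{\Sigma}_D=2\boldsymbol{\Sigma}_B+\frac{2}{q-1}\frac kq\Big(1-\frac kq\Big)(\mathbb{E}[\mathbf{X}_1]-\mathbb{E}[\mathbf{X}_0])(\mathbb{E}[\mathbf{X}_1]-\mathbb{E}[\mathbf{X}_0])^{\mathsf T}.$$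
   Context: The bag oracle $\mathrm{Ex}(f,\mathcal{D},q,k)$ returns a bag of $q$ independent points, $k$ drawn from $\mathcal{D}$ conditioned on $f=1$ and $q-k$ from $\mathcal{D}$ conditioned on $f=0$. $\boldsymbol{\Sigma}_B:=\mathrm{Var}[\mathbf{X}]$ where $\mathbf{X}$ is a uniformly random point of a random bag; $\boldsymbol{\Sigma}_D:=\mathbb{E}[\mathbf{Z}\mathbf{Z}^{\mathsf T}]$ where $\mathbf{Z}=\mathbf{X}'_1-\mathbf{X}'_2$ for a uniformly random pair drawn without replacement from a random bag. *)

(* Defs.v *)
From HB Require Import structures.
From mathcomp Require Import all_boot all_order all_algebra.
From mathcomp Require Import all_classical all_reals all_analysis.
Set Implicit Arguments. Unset Strict Implicit. Unset Printing Implicit Defensive.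
Import Order.TTheory GRing.Theory Num.Theory.
Local Open Scope classical_set_scope.
Local Open Scope ring_scope.

(* Points of R^d are represented as d-tuples of reals, equipped with the
   product (= Borel) sigma-algebra provided by MathComp-Analysis. *)

Definition condprob {R : realType} {dT} {T : measurableType dT}
  (D : probability T R) (F A : set T) : \bar R :=
  (fine (D (A `&` F)) / fine (D F))%:E.

Definition mutually_independent {R : realType} {dO} {Om : measurableType dO}
  {dT} {T : measurableType dT} (P : probability Om R) (q : nat)
  (B : 'I_q -> Om -> T) : Prop :=
  forall A : 'I_q -> set T, (forall i, measurable (A i)) ->
    P (\bigcap_(i in [set: 'I_q]) (B i @^-1` A i)) =
    (\big[*%E/1%E]_(i < q) P (B i @^-1` A i))%E.

(* B = (B_0, ..., B_{q-1}) is a draw of Ex(f, D, q, k): q independent points,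
   the k first ones distributed as D conditioned on f = 1, the q - k others
   as D conditioned on f = 0 (the order inside the bag is irrelevant for the
   quantities below, which are symmetric in the points). *)
Definition bag_oracle {R : realType} {dO} {Om : measurableType dO} {d : nat}
  (P : probability Om R) (D : probability (d.-tuple R) R)
  (f : d.-tuple R -> bool) (q k : nat) (B : 'I_q -> Om -> d.-tuple R) : Prop :=
  [/\ forall i, measurable_fun setT (B i),
      mutually_independent P B &
      forall (i : 'I_q) (A : set (d.-tuple R)), measurable A ->
        P (B i @^-1` A) = condprob D [set x | f x = (i < k)%N] A].

Definition cond_mean {R : realType} {d : nat} (D : probability (d.-tuple R) R)
  (f : d.-tuple R -> bool) (a : bool) : 'rV[R]_d :=
  \row_j (fine (\int[D]_(x in [set x | f x = a]) (tnth x j)%:E) /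
          fine (D [set x | f x = a])).

Definition bag_mean {R : realType} {dO} {Om : measurableType dO} {d q : nat}
  (P : probability Om R) (B : 'I_q -> Om -> d.-tuple R) (j : 'I_d) : R :=
  q%:R^-1 * \sum_(t < q) fine ('E_P[fun w => tnth (B t w) j]).

(* Sigma_B := Var[X], X a uniformly random point (index uniform on 'I_q,
   independent of the bag) of a random bag *)
Definition Sigma_B {R : realType} {dO} {Om : measurableType dO} {d q : nat}
  (P : probability Om R) (B : 'I_q -> Om -> d.-tuple R) : 'M[R]_d :=
  \matrix_(j, l) (q%:R^-1 * \sum_(t < q)
     fine ('E_P[fun w => (tnth (B t w) j - bag_mean P B j) *
                         (tnth (B t w) l - bag_mean P B l)])).

(* Sigma_D := E[Z Z^T], Z = X'_1 - X'_2 for a uniformly random ordered pair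
   of distinct indices (drawn without replacement, independent of the bag) *)
Definition Sigma_D {R : realType} {dO} {Om : measurableType dO} {d q : nat}
  (P : probability Om R) (B : 'I_q -> Om -> d.-tuple R) : 'M[R]_d :=
  \matrix_(j, l) ((q * q.-1)%:R^-1 * \sum_(t < q) \sum_(s < q | s != t)
     fine ('E_P[fun w => (tnth (B t w) j - tnth (B s w) j) *
                         (tnth (B t w) l - tnth (B s w) l)])).

Arguments bag_oracle {R dO Om d} P D f q k B.

(* Main.v *)
Set Warnings "-notation-overridden,-ambiguous-paths,-notation-incompatible-prefix,-deprecated".
Require Import Defs.
From HB Require Import structures.
From mathcomp Require Import all_boot all_order all_algebra.
From mathcomp Require Import all_classical all_reals all_analysis.
From mathcomp Require Import measurable_realfun.
Import Order.TTheory GRing.Theory Num.Theory.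
Local Open Scope classical_set_scope.
Local Open Scope ring_scope.

From mathcomp Require Import ring lra.

Lemma sum_split (R : pzRingType) (q k : nat) (G : bool -> R) : (k <= q)%N ->
  \sum_(t < q) G (t < k)%N = k%:R * G true + (q - k)%:R * G false.
Proof.
move=> kq.
rewrite -(big_mkord xpredT (fun t => G (t < k)%N)) (@big_cat_nat _ _ _ k 0 q _ _ (leq0n k) kq) /=.
rewrite (eq_big_nat _ _ (F2 := fun _ => G true)); last by move=> i /andP[_ ->].
rewrite (eq_big_nat _ _ (F2 := fun _ => G false) (m := k)); last first.
  by move=> i /andP[ki _]; rewrite ltnNge ki.
by rewrite !sumr_const_nat subn0 mulr_natl mulr_natl.
Qed.

Lemma algebra (R : realFieldType) (q k : nat) (e : 'I_q -> R) (a b : bool -> R) :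
  (2 <= q)%N -> (k <= q)%N ->
  ((q * q.-1)%:R^-1 * \sum_(t < q) \sum_(s < q | s != t)
     (e t + e s - a (t < k)%N * b (s < k)%N - a (s < k)%N * b (t < k)%N)) =
  2 * (q%:R^-1 * \sum_(t < q) (e t - q%:R^-1 * (\sum_(t < q) b (t < k)%N) * a (t < k)%N
        - q%:R^-1 * (\sum_(t < q) a (t < k)%N) * b (t < k)%N
        + q%:R^-1 * (\sum_(t < q) a (t < k)%N) * (q%:R^-1 * \sum_(t < q) b (t < k)%N))) +
  (2 / (q%:R - 1) * (k%:R / q%:R) * (1 - k%:R / q%:R)) *
    ((a true - a false) * (b true - b false)).
Proof.
move=> q2 kq.
set A := \sum_(t < q) a (t < k)%N.
set B := \sum_(t < q) b (t < k)%N.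
have inner t : \sum_(s < q | s != t)
     (e t + e s - a (t < k)%N * b (s < k)%N - a (s < k)%N * b (t < k)%N) =
   (q%:R * e t + \sum_s e s - a (t < k)%N * B - A * b (t < k)%N)
   - (2 * e t - 2 * (a (t < k)%N * b (t < k)%N)).
  rewrite [in RHS](_ : q%:R * e t + \sum_s e s - a (t < k)%N * B - A * b (t < k)%N
     = \sum_s (e t + e s - a (t < k)%N * b (s < k)%N - a (s < k)%N * b (t < k)%N)).
    by rewrite [in RHS](bigD1 t) //=; ring.
  rewrite !sumrB !big_split /= sumr_const card_ord mulr_natl.
  by rewrite /A /B mulr_sumr mulr_suml.
rewrite (eq_bigr _ (fun t _ => inner t)).
rewrite !sumrB ?big_split /= ?sumrB ?big_split /= -?mulr_sumr -?mulr_suml.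
rewrite ?sumrN -?mulr_sumr !sumr_const !card_ord.
rewrite (@sum_split R q k (fun c => a c * b c)) //.
rewrite /A /B !(@sum_split R q k) //.
set E := \sum_(i < q) e i.
have q0 : q%:R != 0 :> R by rewrite pnatr_eq0 -lt0n (leq_trans _ q2).
have q1 : q%:R - 1 != 0 :> R.
  rewrite subr_eq0 (_ : 1 = 1%:R) // eqr_nat; apply/eqP => h; move: q2; rewrite h.
  by [].
rewrite natrM natrB // -subn1 natrB ?(leq_trans _ q2) //.
rewrite -[E *+ q]mulr_natl -[_ *+ q]mulr_natl.
move: q0 q1; set Q := q%:R; set K := k%:R => q0 q1.
field.
by rewrite q0 q1.
Qed.
Section indep.
Local Open Scope ereal_scope.
Context d1 d2 (Om : measurableType d1) (T : measurableType d2) (R : realType)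
  (P : probability Om R).
Variables (X Y : Om -> T).
Hypotheses (mX : measurable_fun setT X) (mY : measurable_fun setT Y).
Hypothesis XY : forall A B, measurable A -> measurable B ->
  P (X @^-1` A `&` Y @^-1` B) = P (X @^-1` A) * P (Y @^-1` B).

Let Xf : {mfun Om >-> T} := HB.pack X (isMeasurableFun.Build _ _ _ _ _ mX).
Let Yf : {mfun Om >-> T} := HB.pack Y (isMeasurableFun.Build _ _ _ _ _ mY).
Let mu := distribution P Xf.
Let nu := distribution P Yf.
Let Z w := (X w, Y w).
Let mZ : measurable_fun setT Z. Proof. exact: measurable_fun_pair. Qed.

Let eqm A : measurable A -> (mu \x nu) A = pushforward P Z A.
Proof.
apply: product_measure_unique => B C mB mC.
rewrite /pushforward /mu /nu /distribution /pushforward /= -XY//.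
Qed.


Variables (g h : T -> R).
Hypotheses (mg : measurable_fun setT g) (mh : measurable_fun setT h).
Hypothesis ig : P.-integrable setT (fun w => (g (X w))%:E).
Hypothesis ih : P.-integrable setT (fun w => (h (Y w))%:E).

Let F (z : T * T) := (g z.1 * h z.2)%:E.
Let mF : measurable_fun setT F.
Proof.
apply/measurable_EFinP; apply: measurable_funM.
  exact: measurableT_comp mg measurable_fst.
exact: measurableT_comp mh measurable_snd.
Qed.

Let igmu : mu.-integrable setT (EFin \o g).
Proof.
apply: integrable_pushforward => //; first exact/measurable_EFinP.
Qed.

Let ihnu : nu.-integrable setT (EFin \o h).
Proof.
apply: integrable_pushforward => //; first exact/measurable_EFinP.
Qed.

Let iF : (mu \x nu).-integrable setT F.
Proof.
apply/integrable12ltyP => //.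
have -> : (fun x => \int[nu]_y `|F (x, y)|) =
    (fun x => `|g x|%:E * \int[nu]_y `|h y|%:E).
  apply/funext => x; rewrite -ge0_integralZl_EFin//; last first.
    by apply/measurable_EFinP; apply: measurableT_comp.
  by apply: eq_integral => y _; rewrite /F /= normrM EFinM.
have hfin : \int[nu]_y `|h y|%:E < +oo.
  by move/integrableP : ihnu => [].
rewrite ge0_integralZr//; last 2 first.
  - by apply/measurable_EFinP; apply: measurableT_comp.
  - exact: integral_ge0.
rewrite lte_mul_pinfty//; first exact: integral_ge0.
  by rewrite ge0_fin_numE; [move/integrableP : igmu => [] | exact: integral_ge0].
Qed.

Lemma indep_integrable : P.-integrable setT (fun w => (g (X w) * h (Y w))%:E).
Proof.
apply/integrableP; split.
  apply/measurable_EFinP; apply: measurable_funM.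
    exact: measurableT_comp mg mX.
  exact: measurableT_comp mh mY.
have -> : \int[P]_w `|(g (X w) * h (Y w))%:E| = \int[P]_w ((abse \o F) \o Z) w.
  by [].
rewrite (_ : \int[P]_w _ = \int[pushforward P Z]_y (abse \o F) y); last first.
  rewrite ge0_integral_pushforward //=; last exact: measurableT_comp.
rewrite (eq_measure_integral (mu \x nu)) //.
  by move/integrableP : iF => [].
by move=> A mA _; symmetry; apply: eqm.
Qed.

Lemma indep_integral : \int[P]_w (g (X w) * h (Y w))%:E =
  \int[P]_w (g (X w))%:E * \int[P]_w (h (Y w))%:E.
Proof.
have -> : \int[P]_w (g (X w) * h (Y w))%:E = \int[pushforward P Z]_y F y.
  rewrite integral_pushforward //=; last by rewrite preimage_setT; exact: indep_integrable.
rewrite (eq_measure_integral (mu \x nu)) //; last by move=> A mA _; symmetry; apply: eqm.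
rewrite -integral12_prod_meas1 //.
have hfin : \int[nu]_y (EFin \o h) y = (fine (\int[nu]_y (EFin \o h) y))%:E.
  by rewrite fineK // integrable_fin_num.
have -> : fubini_F nu F = (fun x => (g x)%:E * (fine (\int[nu]_y (EFin \o h) y))%:E).
  apply/funext => x; rewrite -hfin /fubini_F -integralZl //.
rewrite integralZr // -hfin.
have -> : \int[mu]_x (g x)%:E = \int[P]_w (g (X w))%:E.
  by rewrite integral_pushforward //= ?preimage_setT //; exact/measurable_EFinP.
have -> : \int[nu]_x (EFin \o h) x = \int[P]_w (h (Y w))%:E.
  by rewrite integral_pushforward //= ?preimage_setT //; exact/measurable_EFinP.
by [].
Qed.

End indep.

Section law.
Local Open Scope ereal_scope.
Context d1 d2 (Om : measurableType d1) (T : measurableType d2) (R : realType)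
  (P : probability Om R) (D : probability T R).
Variables (Fs : set T) (X : Om -> T).
Hypotheses (mFs : measurable Fs) (DF : 0 < D Fs) (mX : measurable_fun setT X).
Hypothesis hX : forall A, measurable A ->
  P (X @^-1` A) = ((fine (D (A `&` Fs))) / fine (D Fs))%:E.

Let c0 : (0 <= (fine (D Fs))^-1)%R.
Proof. by rewrite invr_ge0 fine_ge0. Qed.
Let c : {nonneg R} := NngNum c0.

Let law_push (g : T -> \bar R) (mg : measurable_fun setT g) :
  \int[pushforward P X]_(y in setT) g y = \int[mscale c D]_(y in Fs) g y.
Proof.
rewrite -(setUv Fs) integral_setU //; last 3 first.
- exact: measurableC.
- by rewrite setUv.
- exact/disj_setPCl.
rewrite [X in _ + X]null_set_integral ?adde0 //; last 2 first.
- exact: measurable_funTS.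
- change (P (X @^-1` (~` Fs)) = 0).
  by rewrite hX ?setICl ?measure0 ?mul0r //; exact: measurableC.
apply: eq_measure_integral => A mA AF.
change (P (X @^-1` A) = (c%:num)%:E * D A).
rewrite hX // setIidl // -[D A]fineK ?fin_num_measure // -EFinM mulrC.
  by [].
exact: measurableC.
Qed.

Lemma law_ge0 (g : T -> \bar R) (mg : measurable_fun setT g) (g0 : forall x, 0 <= g x) :
  \int[P]_w g (X w) = (c%:num)%:E * \int[D]_(x in Fs) g x.
Proof.
have -> : \int[P]_w g (X w) = \int[pushforward P X]_(y in setT) g y.
  by rewrite ge0_integral_pushforward //= preimage_setT.
rewrite law_push // ge0_integral_mscale //; exact: measurable_funTS.
Qed.

Lemma law_integrable (g : T -> R) (mg : measurable_fun setT g) :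
  D.-integrable Fs (EFin \o g) -> P.-integrable setT (fun w => (g (X w))%:E).
Proof.
move=> ig; apply/integrableP; split.
  by apply/measurable_EFinP; exact: measurableT_comp mg mX.
rewrite (@law_ge0 (fun x => `|(g x)%:E|)) //; last first.
  by apply: measurableT_comp => //; exact/measurable_EFinP.
rewrite lte_mul_pinfty //.
by move/integrableP : ig => [].
Qed.

Lemma law_integral (g : T -> R) (mg : measurable_fun setT g) :
  D.-integrable Fs (EFin \o g) ->
  \int[P]_w (g (X w))%:E = (c%:num * fine (\int[D]_(x in Fs) (g x)%:E))%:E.
Proof.
move=> ig.
have -> : \int[P]_w (g (X w))%:E = \int[pushforward P X]_(y in setT) (g y)%:E.
  rewrite integral_pushforward //= ?preimage_setT //; first exact/measurable_EFinP.
  exact: law_integrable.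
rewrite law_push; last exact/measurable_EFinP.
rewrite integralE ge0_integral_mscale //; last first.
  by apply: measurable_funepos; apply: measurable_funTS; exact/measurable_EFinP.
rewrite ge0_integral_mscale //; last first.
  by apply: measurable_funeneg; apply: measurable_funTS; exact/measurable_EFinP.
rewrite [in RHS]integralE.
have f1 : \int[D]_(x in Fs) (EFin \o g)^\+ x \is a fin_num.
  exact: integrable_pos_fin_num.
have f2 : \int[D]_(x in Fs) (EFin \o g)^\- x \is a fin_num.
  exact: integrable_neg_fin_num.
rewrite -(fineK f1) -(fineK f2) -!EFinM -EFinB /= -mulrBr.
by [].
Qed.

End law.

Section Ef.
Context {d} {Om : measurableType d} {R : realType} (P : probability Om R).
Definition Ef (u : Om -> R) : R := fine (\int[P]_w (u w)%:E).
Definition Pint (u : Om -> R) := P.-integrable setT (EFin \o u).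

Lemma PintD u v : Pint u -> Pint v -> Pint (fun w => u w + v w).
Proof.
move=> iu iv; rewrite /Pint (_ : EFin \o (fun w => u w + v w) = ((EFin \o u) \+ (EFin \o v))%E).
  exact: integrableD.
by apply/funext => w /=; rewrite EFinD.
Qed.

Lemma PintB u v : Pint u -> Pint v -> Pint (fun w => u w - v w).
Proof.
move=> iu iv; rewrite /Pint (_ : EFin \o (fun w => u w - v w) = ((EFin \o u) \- (EFin \o v))%E).
  exact: integrableB.
by apply/funext => w /=; rewrite EFinB.
Qed.

Lemma PintZ c u : Pint u -> Pint (fun w => c * u w).
Proof.
move=> iu; rewrite /Pint (_ : EFin \o (fun w => c * u w) = (fun w => (c%:E * (EFin \o u) w)%E)).
  exact: integrableZl.
by apply/funext => w /=; rewrite EFinM.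
Qed.

Lemma Pintcst c : Pint (fun _ => c).
Proof. exact: finite_measure_integrable_cst. Qed.

Lemma EfD u v : Pint u -> Pint v -> Ef (fun w => u w + v w) = Ef u + Ef v.
Proof.
move=> iu iv; rewrite /Ef.
have -> : (\int[P]_w (u w + v w)%R%:E = \int[P]_w ((EFin \o u) \+ (EFin \o v)) w)%E.
  by apply: eq_integral => w _; rewrite EFinD.
rewrite integralD_EFin // fineD //; exact: integrable_fin_num.
Qed.

Lemma EfB u v : Pint u -> Pint v -> Ef (fun w => u w - v w) = Ef u - Ef v.
Proof.
move=> iu iv; rewrite /Ef.
have -> : (\int[P]_w (u w - v w)%R%:E = \int[P]_w ((EFin \o u) \- (EFin \o v)) w)%E.
  by apply: eq_integral => w _; rewrite EFinB.
rewrite integralB // fineB //; exact: integrable_fin_num.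
Qed.

Lemma EfZ c u : Pint u -> Ef (fun w => c * u w) = c * Ef u.
Proof.
move=> iu; rewrite /Ef.
have -> : (\int[P]_w (c * u w)%R%:E = \int[P]_w (c%:E * (EFin \o u) w))%E.
  by apply: eq_integral => w _; rewrite EFinM.
rewrite integralZl // fineM //; exact: integrable_fin_num.
Qed.

Lemma Efcst c : Ef (fun _ => c) = c.
Proof.
rewrite /Ef (_ : (fun _ => _) = cst c%:E) // integral_cst //.
apply: (@eq_trans _ _ (fine (c%:E * 1%E))); last by rewrite mule1.
congr (fine (_ * _)); exact: probability_setT.
Qed.

Lemma EE u : fine ('E_P[u]) = Ef u.
Proof. by rewrite unlock. Qed.

End Ef.

Theorem lemma9 (R : realType) (d : nat) (D : probability (d.-tuple R) R)
  (f : d.-tuple R -> bool) (q k : nat)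
  (dO : measure_display) (Om : measurableType dO) (P : probability Om R)
  (B : 'I_q -> Om -> d.-tuple R) :
  (forall j : 'I_d, (\int[D]_x ((tnth x j) ^+ 2)%:E < +oo)%E) ->
  measurable [set x | f x] ->
  (forall a : bool, (0 < D [set x | f x = a])%E) ->
  (2 <= q)%N -> (1 <= k)%N -> (k <= q - 1)%N ->
  bag_oracle P D f q k B ->
  Sigma_D P B =
    2 *: Sigma_B P B +
    (2 / (q%:R - 1) * (k%:R / q%:R) * (1 - k%:R / q%:R)) *:
      ((cond_mean D f true - cond_mean D f false)^T *m
       (cond_mean D f true - cond_mean D f false)).
Proof.
move=> Hsq mF Hpos q2 k1 kq [mB hind hlaw].
have kq' : (k <= q)%N by apply: leq_trans kq (leq_subr _ _).
have mFa : forall a : bool, measurable [set x : d.-tuple R | f x = a].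
  case; first exact: mF.
  rewrite (_ : [set x | f x = false] = ~` [set x | f x]); first exact: measurableC.
  by apply/seteqP; split => x /=; case: (f x).
have mt (j : 'I_d) : measurable_fun setT (fun x : d.-tuple R => tnth x j).
  exact: measurable_tnth.
have isq (j : 'I_d) : D.-integrable setT (EFin \o (fun x : d.-tuple R => tnth x j ^+ 2)).
  apply/integrableP; split; first by apply/measurable_EFinP; apply: measurable_funX.
  rewrite (eq_integral (fun x : d.-tuple R => ((tnth x j ^+ 2)%R)%:E)); first exact: Hsq.
  by move=> x _ /=; rewrite ger0_norm // sqr_ge0.
have iprod (j l : 'I_d) : Pint D (fun x : d.-tuple R => tnth x j * tnth x l).
  apply: (@le_integrable _ _ _ D setT measurableT _ (EFin \o (fun x : d.-tuple R => tnth x j ^+ 2 + tnth x l ^+ 2))) => //.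
  - by apply/measurable_EFinP; apply: measurable_funM.
  - move=> x _ /=; rewrite lee_fin [X in _ <= X]ger0_norm ?addr_ge0 ?sqr_ge0 // normrM.
    rewrite -[tnth x j ^+ 2]real_normK ?num_real // -[tnth x l ^+ 2]real_normK ?num_real //.
    have := normr_ge0 (tnth x j); have := normr_ge0 (tnth x l).
    by nra.
  - exact: (PintD D _ _ (isq j) (isq l)).
have ilin (j : 'I_d) : Pint D (fun x : d.-tuple R => tnth x j).
  apply: (@le_integrable _ _ _ D setT measurableT _ (EFin \o (fun x : d.-tuple R => 1 + tnth x j ^+ 2))) => //.
  - exact/measurable_EFinP.
  - move=> x _ /=; rewrite lee_fin [X in _ <= X]ger0_norm ?addr_ge0 ?sqr_ge0 //.
    rewrite -[tnth x j ^+ 2]real_normK ?num_real //.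
    have := normr_ge0 (tnth x j).
    by nra.
  - exact: (PintD D _ _ (Pintcst D 1) (isq j)).
have ilinF (t : 'I_q) (j : 'I_d) :
    D.-integrable [set x | f x = (t < k)%N] (EFin \o (fun x : d.-tuple R => tnth x j)).
  exact: integrableS (ilin j).
have iprodF (t : 'I_q) (j l : 'I_d) :
    D.-integrable [set x | f x = (t < k)%N]
      (EFin \o (fun x : d.-tuple R => tnth x j * tnth x l)).
  exact: integrableS (iprod j l).
have hm (t : 'I_q) (j : 'I_d) :
    Ef P (fun w => tnth (B t w) j) = cond_mean D f (t < k)%N 0 j.
  rewrite /Ef (@law_integral _ _ _ _ _ P D _ (B t) (mFa _) (mB t) (hlaw t)
    (fun x => tnth x j) (mt j) (ilinF t j)) /= mxE mulrC.
  by [].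
have iP1 (t : 'I_q) (j : 'I_d) : Pint P (fun w => tnth (B t w) j).
  exact: (@law_integrable _ _ _ _ _ P D _ (B t) (mFa _) (mB t) (hlaw t)
    (fun x => tnth x j) (mt j) (ilinF t j)).
have iP2 (t : 'I_q) (j l : 'I_d) : Pint P (fun w => tnth (B t w) j * tnth (B t w) l).
  exact: (@law_integrable _ _ _ _ _ P D _ (B t) (mFa _) (mB t) (hlaw t)
    (fun x => tnth x j * tnth x l) (measurable_funM (mt j) (mt l)) (iprodF t j l)).
have indep2 (t s : 'I_q) : t != s -> forall A B', measurable A -> measurable B' ->
    P (B t @^-1` A `&` B s @^-1` B') = (P (B t @^-1` A) * P (B s @^-1` B'))%E.
  move=> ts A B' mA mB'.
  pose Af i := if i == t then A else if i == s then B' else setT.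
  have mAf i : measurable (Af i).
    by rewrite /Af; case: ifP => _ //; case: ifP => _ //.
  have := hind Af mAf.
  have st : (s == t) = false by apply/negbTE; rewrite eq_sym.
  rewrite (_ : \bigcap_(i in [set: 'I_q]) (B i @^-1` Af i) = B t @^-1` A `&` B s @^-1` B').
    move=> ->.
    rewrite (bigD1 t) //= (bigD1 s) /=; last by rewrite eq_sym.
    rewrite big1 ?mule1 /Af ?eqxx ?st //.
    move=> i /andP[it ist]; rewrite (negbTE it) (negbTE ist) preimage_setT.
    exact: probability_setT.
  apply/seteqP; split => w /=.
    move=> h; split.
      by have := h t I; rewrite /Af eqxx.
    by have := h s I; rewrite /Af st eqxx.
  move=> [h1 h2] i _; rewrite /Af; case: eqP => [->//|_]; case: eqP => [->//|_].
  by [].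
have iPx (t s : 'I_q) (j l : 'I_d) : t != s ->
    Pint P (fun w => tnth (B t w) j * tnth (B s w) l).
  move=> ts.
  exact: (@indep_integrable _ _ _ _ _ P (B t) (B s) (mB t) (mB s) (indep2 t s ts)
    _ _ (mt j) (mt l) (iP1 t j) (iP1 s l)).
have hx (t s : 'I_q) (j l : 'I_d) : t != s ->
    Ef P (fun w => tnth (B t w) j * tnth (B s w) l) =
    Ef P (fun w => tnth (B t w) j) * Ef P (fun w => tnth (B s w) l).
  move=> ts; rewrite /Ef.
  rewrite (@indep_integral _ _ _ _ _ P (B t) (B s) (mB t) (mB s) (indep2 t s ts)
    _ _ (mt j) (mt l) (iP1 t j) (iP1 s l)).
  by rewrite fineM //; apply: integrable_fin_num => //; apply: iP1.
pose e2 (t : 'I_q) (j l : 'I_d) := Ef P (fun w => tnth (B t w) j * tnth (B t w) l).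
have key1 (t s : 'I_q) (j l : 'I_d) : t != s ->
    Ef P (fun w => (tnth (B t w) j - tnth (B s w) j) * (tnth (B t w) l - tnth (B s w) l))
    = e2 t j l + e2 s j l - cond_mean D f (t < k)%N 0 j * cond_mean D f (s < k)%N 0 l
      - cond_mean D f (s < k)%N 0 j * cond_mean D f (t < k)%N 0 l.
  move=> ts.
  have st : s != t by rewrite eq_sym.
  rewrite (_ : (fun w => _) = (fun w =>
     ((tnth (B t w) j * tnth (B t w) l - tnth (B t w) j * tnth (B s w) l)
       - tnth (B s w) j * tnth (B t w) l) + tnth (B s w) j * tnth (B s w) l)); last first.
    by apply/funext => w; ring.
  rewrite EfD; last exact: iP2.
    rewrite EfB; last exact: iPx.
      rewrite EfB; last exact: iPx.
        by rewrite (hx t s j l ts) (hx s t j l st) !hm /e2; ring.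
      exact: iP2.
    by apply: PintB; [exact: iP2|exact: iPx].
  by apply: PintB; [apply: PintB; [exact: iP2|exact: iPx]|exact: iPx].
have key2 (t : 'I_q) (j l : 'I_d) (c1 c2 : R) :
    Ef P (fun w => (tnth (B t w) j - c1) * (tnth (B t w) l - c2))
    = e2 t j l - c2 * cond_mean D f (t < k)%N 0 j - c1 * cond_mean D f (t < k)%N 0 l
      + c1 * c2.
  rewrite (_ : (fun w => _) = (fun w =>
     ((tnth (B t w) j * tnth (B t w) l - c2 * tnth (B t w) j)
       - c1 * tnth (B t w) l) + c1 * c2)); last first.
    by apply/funext => w; ring.
  rewrite EfD; last exact: Pintcst.
    rewrite EfB; last exact: PintZ.
      rewrite EfB; last exact: PintZ.
        by rewrite Efcst !EfZ // !hm.
      exact: iP2.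
    by apply: PintB; [exact: iP2|exact: PintZ].
  by apply: PintB; [apply: PintB; [exact: iP2|exact: PintZ]|exact: PintZ].
have hbm (j : 'I_d) : bag_mean P B j = q%:R^-1 * \sum_(t < q) cond_mean D f (t < k)%N 0 j.
  rewrite /bag_mean; congr (_ * _); apply: eq_bigr => t _.
  by rewrite EE hm.
apply/matrixP => j l.
have hSD : Sigma_D P B j l = (q * q.-1)%:R^-1 * \sum_(t < q) \sum_(s < q | s != t)
     (e2 t j l + e2 s j l - cond_mean D f (t < k)%N 0 j * cond_mean D f (s < k)%N 0 l
      - cond_mean D f (s < k)%N 0 j * cond_mean D f (t < k)%N 0 l).
  rewrite /Sigma_D mxE; congr (_ * _); apply: eq_bigr => t _; apply: eq_bigr => s st.
  by rewrite EE key1 // eq_sym.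
have hSB : Sigma_B P B j l = q%:R^-1 * \sum_(t < q) (e2 t j l
     - q%:R^-1 * (\sum_(t < q) cond_mean D f (t < k)%N 0 l) * cond_mean D f (t < k)%N 0 j
     - q%:R^-1 * (\sum_(t < q) cond_mean D f (t < k)%N 0 j) * cond_mean D f (t < k)%N 0 l
     + q%:R^-1 * (\sum_(t < q) cond_mean D f (t < k)%N 0 j) *
       (q%:R^-1 * \sum_(t < q) cond_mean D f (t < k)%N 0 l)).
  rewrite /Sigma_B mxE; congr (_ * _); apply: eq_bigr => t _.
  by rewrite EE key2 !hbm.
move: hSD hSB; move: (Sigma_D P B) (Sigma_B P B) (cond_mean D f) => SD SB cm hSD hSB.
rewrite hSD !mxE hSB big_ord1 !mxE.
exact: (@algebra R q k (fun t => e2 t j l) (fun c => cm c 0 j) (fun c => cm c 0 l) q2 kq').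
Qed.
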